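(* Let $r\in\mathbb{N}\setminus\{0\}$ and \[ G=\left\langle a_1,\ldots,a_r,t_1,\ldots,t_r \;\middle|\; a_ia_j=a_ja_i,\ t_it_j=t_jt_i,\ t_i^2=1,\ t_i^{-1}a_jt_i=\begin{cases}a_j & i\neq j\\ a_i^{-1} & i=j\end{cases}\ (1\le i,j\le r)\right\rangle . \] Then $G$ is virtually abelian of rank $r$, its automorphic growth satisfies $\alpha_G\sim(n\mapsto n^r)$, and $[G,G]=\langle a_1^2,\ldots,a_r^2\rangle$.
   Context: For a finitely generated group $G$ with finite generating set $\Sigma$, the automorphic growth function sends $n$ to the number of $\operatorname{Aut}(G)$-orbits of $G$ containing an element of word length at most $n$; $\alpha_G$ denotes its class under $\sim$, where $f\sim g$ iff $f\preccurlyeq g$ and $g\preccurlyeq f$, and $f\preccurlyeq g$ means there is $\lambda\in\mathbb{N}\setminus\{0\}$ with $f(n)\le\lambda g(\lambda n+\lambda)+\lambda$ for all $n$. The rank of a virtually abelian group is the rank of a finite-index free abelian subgroup. *)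

(* Defs.v *)
From mathcomp Require Import all_boot monoid ssralg ssrint.

Set Implicit Arguments.
Unset Strict Implicit.
Unset Printing Implicit Defensive.

Local Open Scope group_scope.

Section Defs.
Variable G : groupType.

Definition ghom (H K : groupType) (f : H -> K) : Prop :=
  forall x y, f (x * y) = f x * f y.

Definition gaut (f : G -> G) : Prop := ghom f /\ bijective f.

Definition aut_equiv (x y : G) : Prop := exists f, gaut f /\ f x = y.

Definition wlen_le (S : seq G) (n : nat) (g : G) : Prop :=
  exists w : seq G, size w <= n /\
    (forall x, x \in w -> (x \in S) \/ (x^-1 \in S)) /\ foldr mul 1 w = g.

Definition generates (S : seq G) : Prop := forall g, exists n, wlen_le S n g.

Definition in_gen (P : G -> Prop) (g : G) : Prop :=
  exists w : seq G, (forall x, x \in w -> P x \/ P x^-1) /\ foldr mul 1 w = g.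

Definition commutator_elt (g : G) : Prop := exists x y, g = [~ x, y].

(* f n = number of Aut(G)-orbits of G meeting the ball of radius n w.r.t. S:
   witnessed by a duplicate-free list of pairwise Aut-inequivalent elements
   of the ball, meeting every orbit that meets the ball. *)
Definition is_aut_growth (S : seq G) (f : nat -> nat) : Prop :=
  forall n, exists s : seq G,
    [/\ size s = f n, uniq s,
        (forall x, x \in s -> wlen_le S n x),
        (forall x y, x \in s -> y \in s -> aut_equiv x y -> x = y) &
        (forall g, wlen_le S n g -> exists2 x, x \in s & aut_equiv g x)].

(* G has a finite-index subgroup isomorphic to Z^r *)
Definition virtually_abelian_of_rank (r : nat) : Prop :=
  exists phi : ('I_r -> int) -> G,
    (forall u v, phi (fun i => (u i + v i)%R) = phi u * phi v) /\
    (forall u v, phi u = phi v -> forall i, u i = v i) /\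
    (exists cs : seq G, forall g, exists c u, c \in cs /\ g = c * phi u).

End Defs.

Definition gle (f g : nat -> nat) : Prop :=
  exists l, 0 < l /\ forall n, f n <= l * g (l * n + l) + l.
Definition gequiv (f g : nat -> nat) : Prop := gle f g /\ gle g f.

Definition rels (H : groupType) (r : nat) (a t : 'I_r -> H) : Prop :=
  [/\ (forall i j, a i * a j = a j * a i),
      (forall i j, t i * t j = t j * t i),
      (forall i, t i ^+ 2 = 1) &
      (forall i j, (t i)^-1 * a j * t i = if i == j then (a i)^-1 else a j)].

(* (G, a, t) is the group presented by generators a, t and relations [rels]:
   the relations hold, a and t generate G, and every family in any group
   satisfying the relations is the image of a homomorphism from G. *)
Definition presents (G : groupType) (r : nat) (a t : 'I_r -> G) : Prop :=
  [/\ rels a t,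
      (forall g, in_gen (fun x => exists i, x = a i \/ x = t i) g) &
      (forall (H : groupType) (b u : 'I_r -> H), rels b u ->
         exists f : G -> H, ghom f /\ forall i, f (a i) = b i /\ f (t i) = u i)].

(* Main.v *)
From HB Require Import structures.
Require Import Defs.
From mathcomp Require Import all_boot monoid ssralg ssrint.
From mathcomp Require Import order ssrnum zify.
From Stdlib Require Import Classical IndefiniteDescription.
Import Order.TTheory GRing.Theory Num.Theory.

Set Implicit Arguments.
Unset Strict Implicit.
Unset Printing Implicit Defensive.

Definition D := (int * bool)%type.
Definition dmul (x y : D) : D :=
  ((x.1 + (if x.2 then - y.1 else y.1))%R, x.2 (+) y.2).
Definition dinv (x : D) : D := (if x.2 then x.1 else (- x.1)%R, x.2).
Definition d1 : D := (0%R, false).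

Lemma dmulA : associative dmul.
Proof.
by move=> [k e] [l f] [m g]; case: e; case: f; case: g;
  rewrite /dmul /=; congr pair; lia.
Qed.
Lemma dmul1 : left_id d1 dmul.
Proof. by move=> [k e]; rewrite /dmul /=; congr pair; lia. Qed.
Lemma dmulr1 : right_id d1 dmul.
Proof. by move=> [k e]; case: e; rewrite /dmul /=; congr pair; lia. Qed.
Lemma dmulV : left_inverse d1 dinv dmul.
Proof. by move=> [k e]; case: e; rewrite /dmul /=; congr pair; lia. Qed.
Lemma dmulrV : right_inverse d1 dinv dmul.
Proof. by move=> [k e]; case: e; rewrite /dmul /=; congr pair; lia. Qed.

Definition Hc (r : nat) := {ffun 'I_r -> D}.
HB.instance Definition _ r := Choice.on (Hc r).

Definition hmul r (x y : Hc r) : Hc r := [ffun i => dmul (x i) (y i)].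
Definition hinv r (x : Hc r) : Hc r := [ffun i => dinv (x i)].
Definition hone r : Hc r := [ffun => d1].

Lemma hmulA r : associative (@hmul r).
Proof. by move=> x y z; apply/ffunP=> i; rewrite !ffunE dmulA. Qed.
Lemma hmul1 r : left_id (@hone r) (@hmul r).
Proof. by move=> x; apply/ffunP=> i; rewrite !ffunE dmul1. Qed.
Lemma hmulr1 r : right_id (@hone r) (@hmul r).
Proof. by move=> x; apply/ffunP=> i; rewrite !ffunE dmulr1. Qed.
Lemma hmulV r : left_inverse (@hone r) (@hinv r) (@hmul r).
Proof. by move=> x; apply/ffunP=> i; rewrite !ffunE dmulV. Qed.
Lemma hmulrV r : right_inverse (@hone r) (@hinv r) (@hmul r).
Proof. by move=> x; apply/ffunP=> i; rewrite !ffunE dmulrV. Qed.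

HB.instance Definition _ r := isGroup.Build (Hc r)
  (@hmulA r) (@hmul1 r) (@hmulr1 r) (@hmulV r) (@hmulrV r).

Local Open Scope group_scope.

Lemma mulHE r (x y : Hc r) i : (x * y) i = dmul (x i) (y i).
Proof. by rewrite /= ffunE. Qed.
Lemma invHE r (x : Hc r) i : (x^-1) i = dinv (x i).
Proof. by rewrite /= ffunE. Qed.
Lemma oneHE r i : (1 : Hc r) i = d1.
Proof. by rewrite /= ffunE. Qed.

Section Delta.
Variable r : nat.
Implicit Types (i j : 'I_r) (x y : D).

Definition delta i x : Hc r := [ffun j => if j == i then x else d1].
Definition hb i := delta i (1%R, false).
Definition hu i := delta i (0%R, true).

Lemma deltaE i x j : delta i x j = if j == i then x else d1.
Proof. by rewrite ffunE. Qed.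

Lemma deltaM i x y : delta i x * delta i y = delta i (dmul x y).
Proof.
apply/ffunP=> j; rewrite mulHE !deltaE; case: eqP => // _; exact: dmul1.
Qed.

Lemma deltaV i x : (delta i x)^-1 = delta i (dinv x).
Proof.
apply/ffunP=> j; rewrite invHE !deltaE; case: eqP => // _;
  by rewrite /dinv /=; congr pair; lia.
Qed.

Lemma delta1 i : delta i d1 = 1.
Proof. by apply/ffunP=> j; rewrite deltaE oneHE; case: eqP. Qed.

Lemma deltaC i j x y : i != j -> commute (delta i x) (delta j y).
Proof.
move=> nij; apply/ffunP=> m; rewrite !mulHE !deltaE.
case: (eqVneq m i) => [->|nmi]; first by rewrite (negbTE nij) dmulr1 dmul1.
by rewrite dmulr1 dmul1.
Qed.

Lemma deltaCT i j (k l : int) : commute (delta i (k, false)) (delta j (l, false)).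
Proof.
case: (eqVneq i j) => [->|nij]; last exact: deltaC.
by rewrite /commute !deltaM /dmul /=; congr delta; congr pair; lia.
Qed.

Lemma rels_H : rels hb hu.
Proof.
split.
- move=> i j; exact: deltaCT.
- move=> i j; case: (eqVneq i j) => [->//|nij]; exact: deltaC.
- move=> i; rewrite expg2 /hu deltaM -(delta1 i); congr delta.
- move=> i j; case: (eqVneq i j) => [<-|nij].
    rewrite /hu /hb !deltaV !deltaM; congr delta.
  have nji : j != i by rewrite eq_sym.
  by rewrite -mulgA /hb /hu (deltaC _ _ nji) mulKg.
Qed.

End Delta.

Definition zpow (G : groupType) (x : G) (k : int) : G :=
  match k with Posz n => x ^+ n | Negz n => (x ^+ n.+1)^-1 end.

Section GenGroup.
Variable G : groupType.
Implicit Types x y z : G.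

Lemma ghom1 (H : groupType) (f : G -> H) : ghom f -> f 1 = 1.
Proof.
move=> hf; apply: (@mulgI _ (f 1)); by rewrite -hf !mulg1.
Qed.

Lemma ghomV (H : groupType) (f : G -> H) x : ghom f -> f x^-1 = (f x)^-1.
Proof.
move=> hf; apply: (@mulIg _ (f x)); by rewrite -hf mulVg mulVg ghom1.
Qed.

Lemma ghomX (H : groupType) (f : G -> H) x n : ghom f -> f (x ^+ n) = (f x) ^+ n.
Proof.
move=> hf; elim: n => [|n IH]; first by rewrite !expg0 ghom1.
by rewrite !expgS hf IH.
Qed.

Lemma zpow_morph (H : groupType) (f : G -> H) x k :
  ghom f -> f (zpow x k) = zpow (f x) k.
Proof.
move=> hf; case: k => n; rewrite /zpow; first exact: ghomX.
by rewrite ghomV // ghomX.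
Qed.

Lemma zpow0 x : zpow x 0 = 1. Proof. by []. Qed.

Lemma zpowN x k : zpow x (- k)%R = (zpow x k)^-1.
Proof.
case: k => [[|n]|n]; first by rewrite oppr0 /zpow expg0 invg1.
  by rewrite -NegzE.
by rewrite NegzE opprK /zpow invgK.
Qed.

Lemma zpowS x k : zpow x (1 + k)%R = x * zpow x k.
Proof.
case: k => [n|[|n]].
- by rewrite -PoszD add1n /zpow expgS.
- have -> : (1 + Negz 0 = 0)%R by rewrite NegzE; lia.
  by rewrite /zpow expg1 mulgV.
- have -> : (1 + Negz n.+1 = Negz n)%R by rewrite !NegzE; lia.
  by rewrite /zpow (expgSr x n.+1) invgM mulVKg.
Qed.

Lemma zpowP x k : zpow x (k - 1)%R = x^-1 * zpow x k.
Proof.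
by rewrite -{2}(subrK 1%R k) (addrC (k - 1)%R) zpowS mulKg.
Qed.

Lemma zpow_inv x k : zpow (x^-1) k = (zpow x k)^-1.
Proof. by case: k => n /=; rewrite expVgn ?invgK. Qed.

Lemma commute_inv x y : commute x y -> commute x y^-1.
Proof. exact: commuteV. Qed.

Lemma zpow_commute x y k : commute x y -> commute (zpow x k) y.
Proof.
move=> cxy; apply: commute_sym; case: k => n /=.
  by apply: commuteX; apply: commute_sym.
by apply: commuteV; apply: commuteX; apply: commute_sym.
Qed.

Lemma ghom_conj y : ghom (fun z => y^-1 * z * y).
Proof. by move=> a b; rewrite !mulgA mulgK. Qed.

Lemma zpow_conj x y k : y^-1 * zpow x k * y = zpow (y^-1 * x * y) k.
Proof. exact: (zpow_morph _ _ (ghom_conj y)). Qed.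

End GenGroup.

Section Rels.
Variables (K : groupType) (r : nat) (a t : 'I_r -> K).
Hypothesis hr : rels a t.
Implicit Types (i j : 'I_r) (x y : D).

Lemma r_ac i j : commute (a i) (a j).
Proof. by case: hr => h _ _ _; exact: h. Qed.
Lemma r_tc i j : commute (t i) (t j).
Proof. by case: hr => _ h _ _; exact: h. Qed.
Lemma r_tinv i : (t i)^-1 = t i.
Proof. by case: hr => _ _ h _; apply: mulg1_eq; rewrite -expg2 h. Qed.
Lemma r_conj i j : (t i)^-1 * a j * t i = if i == j then (a i)^-1 else a j.
Proof. by case: hr => _ _ _ h; exact: h. Qed.

Lemma r_at i j : i != j -> commute (a j) (t i).
Proof.
move=> nij; have := r_conj i j; rewrite (negbTE nij) r_tinv => e.
by rewrite /commute -{1}e -mulgA -expg2; case: hr => _ _ h _; rewrite h mulg1.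
Qed.

Lemma r_ta i k : t i * zpow (a i) k = zpow (a i) (- k)%R * t i.
Proof.
have e := zpow_conj (a i) (t i) k.
rewrite r_conj eqxx zpow_inv -zpowN r_tinv in e.
by rewrite -e -mulgA -expg2; case: hr => _ _ h _; rewrite h mulg1.
Qed.

Definition tt i (b : bool) := if b then t i else 1.
Definition E i x := zpow (a i) x.1 * tt i x.2.

Lemma commute_E X i x : commute X (a i) -> commute X (t i) -> commute X (E i x).
Proof.
move=> ca ct; apply: commuteM; first by apply: commute_sym; apply: zpow_commute; apply: commute_sym.
by rewrite /tt; case: (x.2) => //; exact: commute1.
Qed.

Lemma E_a i x : a i * E i x = E i (dmul (1%R, false) x).
Proof. by case: x => k e; rewrite /E /dmul /= mulgA -zpowS. Qed.

Lemma E_aV i x : (a i)^-1 * E i x = E i (dmul ((-1)%R, false) x).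
Proof.
case: x => k e; rewrite /E /dmul /= mulgA -zpowP; congr (zpow _ _ * _).
by rewrite addrC.
Qed.

Lemma E_t i x : t i * E i x = E i (dmul (0%R, true) x).
Proof.
case: x => k e; rewrite /E /dmul /= mulgA r_ta add0r -mulgA; congr (_ * _).
rewrite /tt; case: e => /=; last by rewrite mulg1.
by rewrite -expg2; case: hr => _ _ h _; rewrite h.
Qed.

Lemma E_d1 i : E i d1 = 1.
Proof. by rewrite /E /= mulg1. Qed.

Definition F (l : seq 'I_r) (h : 'I_r -> D) :=
  foldr (fun i acc => E i (h i) * acc) 1 l.

Lemma F_ext l h h' : (forall i, i \in l -> h i = h' i) -> F l h = F l h'.
Proof.
elim: l => //= i l IH e; rewrite e ?mem_head // IH // => m ml.
by apply: e; rewrite in_cons ml orbT.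
Qed.

Lemma F_act l h j X z : uniq l -> j \in l ->
  (forall i, i != j -> commute X (E i (h i))) -> X * E j (h j) = E j z ->
  X * F l h = F l (fun i => if i == j then z else h i).
Proof.
move=> + + cX eX; elim: l => //= i l IH /andP[il ul].
rewrite in_cons; case: (eqVneq j i) => [eji _|nji /= jl].
  subst j; rewrite mulgA eX; congr (_ * _); apply: F_ext => m ml.
  by case: eqP => // emj; move: il; rewrite -emj ml.
rewrite mulgA (cX i); last by rewrite eq_sym.
by rewrite -mulgA IH.
Qed.

Definition psi (h : Hc r) := F (enum 'I_r) (fun i => h i).

Lemma F_one l : F l (fun _ => d1) = 1.
Proof. by elim: l => //= i l ->; rewrite E_d1 mulg1. Qed.

Lemma psi_act (h : Hc r) j X z :
  (forall i, i != j -> commute X (E i (h i))) -> X * E j (h j) = E j z ->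
  X * psi h = psi [ffun i => if i == j then z else h i].
Proof.
move=> cX eX; rewrite /psi (@F_act _ _ j X z) ?enum_uniq ?mem_enum //.
by apply: F_ext => m _; rewrite ffunE.
Qed.

Lemma psi_surj : (forall g, in_gen (fun v : K => exists i, v = a i \/ v = t i) g) ->
  forall g, exists h : Hc r, g = psi h.
Proof.
move=> gen g; have [w [hw <-]] := gen g; clear g gen.
elim: w hw => [|v w IH] hw /=.
  by exists 1; rewrite /psi -(F_one (enum 'I_r)); apply: F_ext => m _; rewrite oneHE.
have [h ->] := IH (fun (q : K) yw => hw q (@mem_behead _ (v :: w) q yw)).
have hx := hw v (mem_head _ _).
have cA i j : i != j -> commute (a j) (E i (h i)).
  move=> nij; apply: commute_E; [exact: r_ac | exact: r_at].
have cT i j : i != j -> commute (t j) (E i (h i)).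
  move=> nij; apply: commute_E; [apply: commute_sym; apply: r_at; by rewrite eq_sym | exact: r_tc].
case: hx => [[j [->|->]]|[j [ex|ex]]].
- eexists; apply: (@psi_act h j); last exact: E_a.
  by move=> i nij; exact: (cA i j nij).
- eexists; apply: (@psi_act h j); last exact: E_t.
  by move=> i nij; exact: (cT i j nij).
- have -> : v = (a j)^-1 by rewrite -ex invgK.
  eexists; apply: (@psi_act h j); last exact: E_aV.
  by move=> i nij; apply: commute_sym; apply: commuteV; apply: commute_sym; exact: (cA i j nij).
- have -> : v = t j by rewrite -r_tinv -ex invgK.
  eexists; apply: (@psi_act h j); last exact: E_t.
  by move=> i nij; exact: (cT i j nij).
Qed.

End Rels.

Section HComp.
Variable r : nat.
Implicit Types (i j : 'I_r).

Lemma zpow_delta i (c k : int) :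
  zpow (delta i (c, false)) k = delta i ((c * k)%R, false).
Proof.
case: k => n.
  rewrite /zpow; elim: n => [|n IH]; first by rewrite expg0 mulr0 -(delta1 i).
  rewrite expgS IH deltaM /dmul /=; congr (delta _ (_, _)); lia.
rewrite /zpow.
have -> : (delta i (c, false)) ^+ n.+1 = delta i ((c * n.+1%:Z)%R, false).
  elim: n.+1 => [|m IH]; first by rewrite expg0 mulr0 -(delta1 i).
  rewrite expgS IH deltaM /dmul /=; congr (delta _ (_, _)); lia.
rewrite deltaV /dinv /=; congr (delta _ (_, _)); rewrite NegzE; lia.
Qed.

Lemma EH i x : E (@hb r) (@hu r) i x = delta i x.
Proof.
case: x => k e; rewrite /E /= zpow_delta mul1r /tt; case: e.
  by rewrite /hu deltaM /dmul /=; congr (delta _ (_, _)); lia.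
by rewrite mulg1.
Qed.

Lemma Fsig (l : seq 'I_r) (s : 'I_r -> 'I_r) (y : 'I_r -> D) m :
  uniq l -> injective s ->
  (foldr (fun i acc => delta (s i) (y i) * acc) 1 l) (s m) =
  if m \in l then y m else d1.
Proof.
move=> + sinj; elim: l => [|i l IH] /=; first by rewrite oneHE.
case/andP=> il ul; rewrite mulHE deltaE IH // in_cons.
case: (eqVneq m i) => [->|nmi] /=.
  by rewrite eqxx (negbTE il) dmulr1.
have -> : (s m == s i) = false by apply/negbTE; apply: contra nmi => /eqP/sinj ->.
by rewrite dmul1.
Qed.

Lemma FH (l : seq 'I_r) h :
  F (@hb r) (@hu r) l h = foldr (fun i acc => delta i (h i) * acc) 1 l.
Proof. by elim: l => //= i l ->; rewrite EH. Qed.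

Lemma psiH (h : Hc r) : psi (@hb r) (@hu r) h = h.
Proof.
apply/ffunP=> m; rewrite /psi FH.
have := @Fsig (enum 'I_r) id (fun i => h i) m (enum_uniq _) (fun x y e => e).
by rewrite mem_enum.
Qed.

End HComp.

Section Iso.
Variables (G : groupType) (r : nat) (a t : 'I_r -> G) (f : G -> Hc r).
Hypotheses (hf : ghom f) (fa : forall i, f (a i) = hb i) (ft : forall i, f (t i) = hu i).

Lemma f_E i x : f (E a t i x) = E (@hb r) (@hu r) i x.
Proof.
rewrite /E hf zpow_morph // fa; congr (_ * _); rewrite /tt; case: (x.2) => //.
exact: ghom1.
Qed.

Lemma f_F l h : f (F a t l h) = F (@hb r) (@hu r) l h.
Proof. elim: l => /= [|i l IH]; [exact: ghom1 | by rewrite hf f_E IH]. Qed.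

Lemma f_psi h : f (psi a t h) = h.
Proof. by rewrite /psi f_F -/(psi _ _ h) psiH. Qed.

End Iso.

Section GenFacts.
Variable G : groupType.
Implicit Types (x y g : G) (S w : seq G).

Lemma inv_hom (H : groupType) (f : G -> H) (f' : H -> G) :
  ghom f -> cancel f f' -> cancel f' f -> ghom f'.
Proof.
move=> hf c1 c2 x y; apply: (can_inj c1); by rewrite hf !c2.
Qed.

Lemma aut_refl x : aut_equiv x x.
Proof. by exists id; split => //; split => //; exists id. Qed.

Lemma aut_sym x y : aut_equiv x y -> aut_equiv y x.
Proof.
move=> [f [[hf [f' c1 c2]] <-]]; exists f'; split; last exact: c1.
by split; [exact: inv_hom c1 c2 | exists f].
Qed.

Lemma aut_trans x y z : aut_equiv x y -> aut_equiv y z -> aut_equiv x z.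
Proof.
move=> [f [[hf bf] <-]] [f' [[hf' bf'] <-]]; exists (f' \o f); split => //.
split; last exact: bij_comp.
by move=> u v /=; rewrite hf hf'.
Qed.

Lemma foldr_mul_cat w1 w2 :
  foldr mul 1 (w1 ++ w2) = foldr mul 1 w1 * foldr mul 1 w2.
Proof. by elim: w1 => /= [|v w IH]; rewrite ?mul1g // IH mulgA. Qed.

Lemma wlen_mono S n m x : n <= m -> wlen_le S n x -> wlen_le S m x.
Proof. by move=> nm [w [sw [hw ew]]]; exists w; split => //; apply: leq_trans nm. Qed.

Lemma wlen_mul S n m x y : wlen_le S n x -> wlen_le S m y -> wlen_le S (n + m) (x * y).
Proof.
move=> [w1 [s1 [h1 <-]]] [w2 [s2 [h2 <-]]]; exists (w1 ++ w2); split; [|split].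
- by rewrite size_cat leq_add.
- by move=> v; rewrite mem_cat => /orP[] ?; [apply: h1 | apply: h2].
- exact: foldr_mul_cat.
Qed.

Lemma wlen_one S : wlen_le S 0 1.
Proof. by exists [::]. Qed.

Lemma wlen_X S d x n : wlen_le S d x -> wlen_le S (d * n) (x ^+ n).
Proof.
move=> hx; elim: n => [|n IH]; first by rewrite muln0 expg0; exact: wlen_one.
by rewrite expgS mulnS; apply: wlen_mul.
Qed.

Lemma in_gen_P (P : G -> Prop) x : P x -> in_gen P x.
Proof. by move=> px; exists [:: x]; split; [move=> v; rewrite inE => /eqP ->; left | rewrite /= mulg1]. Qed.

Lemma in_gen_V (P : G -> Prop) x : P x -> in_gen P x^-1.
Proof. by move=> px; exists [:: x^-1]; split; [move=> v; rewrite inE => /eqP ->; right; rewrite invgK | rewrite /= mulg1]. Qed.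

Lemma in_gen_one (P : G -> Prop) : in_gen P 1.
Proof. by exists [::]. Qed.

Lemma in_gen_mul (P : G -> Prop) x y : in_gen P x -> in_gen P y -> in_gen P (x * y).
Proof.
move=> [w1 [h1 <-]] [w2 [h2 <-]]; exists (w1 ++ w2); split; last exact: foldr_mul_cat.
by move=> v; rewrite mem_cat => /orP[] ?; [apply: h1 | apply: h2].
Qed.

Lemma in_gen_mono (P Q : G -> Prop) x : (forall y, P y -> Q y) -> in_gen P x -> in_gen Q x.
Proof.
move=> PQ [w [hw ew]]; exists w; split => // v /hw [] ?; [left|right]; exact: PQ.
Qed.

Lemma in_gen_ind (P Q : G -> Prop) : Q 1 -> (forall x y, Q x -> Q y -> Q (x * y)) ->
  (forall x, P x -> Q x) -> (forall x, P x -> Q x^-1) -> forall x, in_gen P x -> Q x.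
Proof.
move=> Q1 QM QP QV x [w [hw <-]]; elim: w hw => //= v w IH hw.
apply: QM; last by apply: IH => u uw; apply: hw; rewrite in_cons uw orbT.
case: (hw v (mem_head _ _)) => [|/QV]; first exact: QP.
by rewrite invgK.
Qed.

Lemma in_gen_pow (P : G -> Prop) x n : P x -> in_gen P (x ^+ n).
Proof.
move=> px; elim: n => [|n IH]; first exact: in_gen_one.
by rewrite expgS; apply: in_gen_mul => //; apply: in_gen_P.
Qed.

Lemma in_gen_zpow (P : G -> Prop) x k : P x -> in_gen P (zpow x k).
Proof.
move=> px; case: k => n /=; first exact: in_gen_pow.
rewrite -expVgn; elim: n.+1 => [|m IH]; first exact: in_gen_one.
by rewrite expgS; apply: in_gen_mul => //; apply: in_gen_V.
Qed.

Lemma reps (L : seq G) : exists s : seq G,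
  [/\ uniq s, {subset s <= L},
      (forall x y, x \in s -> y \in s -> aut_equiv x y -> x = y) &
      (forall x, x \in L -> exists2 y, y \in s & aut_equiv x y)].
Proof.
elim: L => [|v L [s [us sL ps cs]]].
  by exists [::]; split => // x; rewrite in_nil.
case: (classic (exists2 y, y \in s & aut_equiv v y)) => [hv|nv].
  exists s; split => //; first by move=> x /sL xs; rewrite in_cons xs orbT.
  by move=> x; rewrite in_cons => /orP[/eqP ->|/cs] //.
exists (v :: s); split.
- rewrite /= us andbT; apply/negP => vs; apply: nv; exists v => //; exact: aut_refl.
- by move=> x; rewrite !in_cons => /orP[->//|/sL ->]; rewrite orbT.
- move=> x y; rewrite !in_cons => /orP[/eqP ->|xs] /orP[/eqP ->|ys] //.
  + by move=> e; case: nv; exists y.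
  + by move=> /aut_sym e; case: nv; exists x.
  + exact: ps.
- move=> x; rewrite in_cons => /orP[/eqP ->|/cs [y ys e]].
    by exists v; rewrite ?mem_head //; exact: aut_refl.
  by exists y; rewrite // in_cons ys orbT.
Qed.

Fixpoint wordsn (A : seq G) (n : nat) : seq (seq G) :=
  if n is n'.+1 then [::] :: [seq v :: w | v <- A, w <- wordsn A n'] else [:: [::]].

Lemma wordsnP (A : seq G) n w :
  size w <= n -> (forall v, v \in w -> v \in A) -> w \in wordsn A n.
Proof.
elim: n w => [|n IH] [|v w] //= sw hw; apply/orP; right.
apply/allpairsP; exists (v, w) => /=; split => //.
  by apply: hw; rewrite mem_head.
by apply: IH => // u uw; apply: hw; rewrite in_cons uw orbT.
Qed.

Lemma wordsnP2 (A : seq G) n w :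
  w \in wordsn A n -> size w <= n /\ (forall v, v \in w -> v \in A).
Proof.
elim: n w => [|n IH] w /=; first by rewrite inE => /eqP ->.
rewrite in_cons => /orP[/eqP -> //|/allpairsP [[v w'] /= [vA w'W ->]]].
have [sw hw] := IH _ w'W; split => // u; rewrite in_cons => /orP[/eqP ->|] //.
exact: hw.
Qed.

Lemma growth_exists S : exists fn, is_aut_growth S fn.
Proof.
pose A := S ++ map (fun v => v^-1) S.
have inA v : (v \in A) <-> (v \in S \/ v^-1 \in S).
  rewrite mem_cat; split => [/orP[->|/mapP [u uS ->]]|[->|vS]]; rewrite ?invgK ?orbT; auto.
  by apply/orP; right; apply/mapP; exists v^-1; rewrite ?invgK.
have hP : forall n, exists m, exists s : seq G,
    [/\ size s = m, uniq s,
        (forall x, x \in s -> wlen_le S n x),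
        (forall x y, x \in s -> y \in s -> aut_equiv x y -> x = y) &
        (forall g, wlen_le S n g -> exists2 x, x \in s & aut_equiv g x)].
  move=> n; have [s [us sL ps cs]] := reps (map (foldr mul 1) (wordsn A n)).
  exists (size s), s; split => //.
    move=> x /sL /mapP [w /wordsnP2 [sw hw] ->]; exists w; split => //; split => // v /hw.
    by move/inA.
  move=> g [w [sw [hw ew]]]; apply: cs; apply/mapP; exists w => //.
  by apply: wordsnP => // v /hw /inA.
have [fn hfn] := functional_choice _ hP.
by exists fn.
Qed.

End GenFacts.

Section Transport.
Variables (G H : groupType) (f : G -> H) (g : H -> G).
Hypotheses (hf : ghom f) (fg : cancel f g) (gf : cancel g f).

Lemma hg : ghom g. Proof. exact: inv_hom hf fg gf. Qed.

Lemma T_wlen S n x : wlen_le S n x -> wlen_le (map f S) n (f x).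
Proof.
move=> [w [sw [hw <-]]]; exists (map f w); split; first by rewrite size_map.
split.
  move=> v /mapP [u uw ->]; case: (hw u uw) => uS; [left|right].
    by apply/mapP; exists u.
  by apply/mapP; exists u^-1 => //; rewrite ghomV.
by elim: w {sw hw} => /= [|u w ->]; [rewrite ghom1 | rewrite hf].
Qed.

Lemma T_aut x y : aut_equiv x y -> aut_equiv (f x) (f y).
Proof.
move=> [p [[hp [p' c1 c2]] <-]]; exists (f \o p \o g); split; last by rewrite /= fg.
split.
  by move=> u v /=; rewrite (hg u v) hp hf.
by exists (f \o p' \o g) => u /=; rewrite ?fg ?c1 ?c2 gf.
Qed.

Lemma T_gen S : generates S -> generates (map f S).
Proof. by move=> gS h; have [n hn] := gS (g h); exists n; rewrite -(gf h); apply: T_wlen. Qed.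

Lemma T_ingen (P : G -> Prop) x : in_gen P x -> in_gen (fun y => P (g y)) (f x).
Proof.
move=> [w [hw <-]]; exists (map f w); split.
  move=> v /mapP [u uw ->]; rewrite fg; case: (hw u uw); [left|right] => //.
  by rewrite -ghomV // fg.
by elim: w {hw} => /= [|u w ->]; [rewrite ghom1 | rewrite hf].
Qed.

End Transport.

Lemma T_growth (G H : groupType) (f : G -> H) (g : H -> G) S fn :
  ghom f -> cancel f g -> cancel g f ->
  is_aut_growth S fn -> is_aut_growth (map f S) fn.
Proof.
move=> hf fg gf hS n; have [s [ss us bs ps cs]] := hS n.
have hg' := hg hf fg gf.
exists (map f s); split.
- by rewrite size_map.
- by rewrite map_inj_uniq //; exact: can_inj fg.
- by move=> x /mapP [y ys ->]; apply: T_wlen; auto.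
- move=> x y /mapP [x' xs ->] /mapP [y' ys ->] e; congr f; apply: ps => //.
  by rewrite -(fg x') -(fg y'); apply: (T_aut hg' gf fg).
- move=> h hh; have := T_wlen hg' hh; rewrite -map_comp (eq_map fg) map_id.
  move=> /cs [y ys e]; exists (f y); first by apply/mapP; exists y.
  by rewrite -(gf h); apply: (T_aut hf fg gf).
Qed.

Lemma T_va (G H : groupType) (f : G -> H) (g : H -> G) r :
  ghom f -> cancel f g -> cancel g f ->
  virtually_abelian_of_rank H r -> virtually_abelian_of_rank G r.
Proof.
move=> hf fg gf [phi [hphi [iphi [cs hcs]]]]; have hg' := hg hf fg gf.
exists (g \o phi); split; [|split].
- by move=> u v /=; rewrite hphi hg'.
- by move=> u v /= e; apply: iphi; rewrite -(gf (phi u)) e gf.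
- exists (map g cs) => x; have [c [u [cc e]]] := hcs (f x).
  exists (g c), u; split; first by apply/mapP; exists c.
  by rewrite /= -hg' -e fg.
Qed.

Section HFacts.
Variable r : nat.
Implicit Types (i j : 'I_r) (x y z : Hc r).

Lemma va_H : virtually_abelian_of_rank (Hc r) r.
Proof.
exists (fun u => [ffun i => (u i, false)] : Hc r); split; [|split].
- by move=> u v; apply/ffunP=> i; rewrite mulHE !ffunE.
- by move=> u v e i; have := congr1 (fun x : Hc r => (x i).1) e; rewrite /= !ffunE.
- exists [seq ([ffun i => (0%R, e i)] : Hc r) | e : {ffun 'I_r -> bool} <- enum {ffun 'I_r -> bool}] => x.
  exists [ffun i => (0%R, (x i).2)].
  exists (fun i => if (x i).2 then (- (x i).1)%R else (x i).1); split.
    apply/mapP; exists [ffun i => (x i).2]; first by rewrite mem_enum.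
    by apply/ffunP=> i; rewrite !ffunE.
  apply/ffunP=> i; rewrite mulHE !ffunE /dmul /=; case: (x i) => k [] /=;
    congr pair; lia.
Qed.

Definition Ker x := forall i, (x i).2 = false /\ exists q : int, (x i).1 = (q * 2)%R.

Lemma Ker1 : Ker 1.
Proof. by move=> i; rewrite oneHE; split => //; exists 0%R. Qed.

Lemma KerM x y : Ker x -> Ker y -> Ker (x * y).
Proof.
move=> kx ky i; have [ex [q eq]] := kx i; have [ey [q' eq']] := ky i.
rewrite mulHE /dmul ex ey /=; split => //; exists (q + q')%R; rewrite eq eq'; lia.
Qed.

Lemma KerV x : Ker x -> Ker x^-1.
Proof.
move=> kx i; have [ex [q eq]] := kx i.
rewrite invHE /dinv ex /=; split => //; exists (- q)%R; rewrite eq; lia.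
Qed.

Lemma dcomm (p q : D) :
  let c := dmul (dinv p) (dmul (dinv q) (dmul p q)) in
  c.2 = false /\ exists m : int, c.1 = (m * 2)%R.
Proof.
case: p q => [k e] [l f]; split; first by case: e; case: f.
exists (if e then (if f then k - l else l) else (if f then - k else 0))%R.
by case: e; case: f; rewrite /dmul /dinv /=; lia.
Qed.

Lemma Ker_comm x : commutator_elt x -> Ker x.
Proof.
move=> [y [z ->]] i; rewrite /commg /conjg !mulHE !invHE; exact: dcomm.
Qed.

Lemma hb2_comm i : commutator_elt (hb i ^+ 2).
Proof.
exists (hb i)^-1, (hu i); rewrite /commg /conjg invgK expg2 /hb /hu !deltaV !deltaM.
by congr delta; rewrite /dmul /dinv /=; congr pair; lia.
Qed.

Lemma Ker_gen x : Ker x -> in_gen (fun y => exists i, y = hb i ^+ 2) x.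
Proof.
move=> kx; rewrite -(psiH x) /psi FH.
elim: (enum 'I_r) => /= [|i l IH]; first exact: in_gen_one.
apply: in_gen_mul => //; have [e [q eq]] := kx i.
have -> : x i = ((2 * q)%R, false) by move: e eq; case: (x i) => k b /= -> ->; rewrite mulrC.
rewrite -zpow_delta; apply: in_gen_zpow; exists i.
by rewrite expg2 /hb deltaM.
Qed.

Lemma comm_H x : in_gen (@commutator_elt (Hc r)) x <->
                 in_gen (fun y => exists i, y = hb i ^+ 2) x.
Proof.
split.
  move=> hx; apply: Ker_gen; move: x hx; apply: in_gen_ind.
  - exact: Ker1.
  - exact: KerM.
  - exact: Ker_comm.
  - by move=> x /Ker_comm /KerV.
move: x; apply: in_gen_ind.
- exact: in_gen_one.
- exact: in_gen_mul.
- by move=> x [i ->]; apply: in_gen_P; exact: hb2_comm.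
- by move=> x [i ->]; apply: in_gen_V; exact: hb2_comm.
Qed.

End HFacts.

Lemma expn_mono m n e : (m <= n)%N -> (m ^ e <= n ^ e)%N.
Proof. by move=> mn; elim: e => // e IH; rewrite !expnS leq_mul. Qed.

Section Upper.
Variable r : nat.
Implicit Types (i j : 'I_r) (x y z : Hc r).

Definition norm x := (\sum_(i < r) absz (x i).1)%N.

Lemma norm_mul x y : (norm (x * y)%g <= norm x + norm y)%N.
Proof.
rewrite /norm -big_split /=; apply: leq_sum => i _; rewrite mulHE /dmul /=.
by case: (x i) => k e; case: (y i) => l f; case: e => /=; lia.
Qed.

Lemma norm_inv x : norm x^-1 = norm x.
Proof.
rewrite /norm; apply: eq_bigr => i _; rewrite invHE /dinv.
by case: (x i) => k [] /=; lia.
Qed.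

Lemma norm_coord x i : (absz (x i).1 <= norm x)%N.
Proof. by rewrite /norm (bigD1 i) //= leq_addr. Qed.

Definition CS (S : seq (Hc r)) := foldr (fun s acc => norm s + acc)%N 0%N S.

Lemma CS_ge S s : s \in S -> (norm s <= CS S)%N.
Proof.
elim: S => //= v S IH; rewrite in_cons => /orP[/eqP ->|/IH h]; first exact: leq_addr.
exact: leq_trans h (leq_addl _ _).
Qed.

Lemma wlen_norm S n x : wlen_le S n x -> (norm x <= n * CS S)%N.
Proof.
move=> [w [sw [hw <-]]]; elim: w n sw hw => [|v w IH] n sw hw /=.
  by rewrite /norm big1 // => i _; rewrite oneHE.
case: n sw => // n sw; rewrite mulSn; apply: leq_trans (norm_mul _ _) _.
apply: leq_add.
  case: (hw v (mem_head _ _)) => /CS_ge //; by rewrite norm_inv.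
by apply: IH => // u uw; apply: hw; rewrite in_cons uw orbT.
Qed.

Definition aut_coord (s : bool) (c : int) (p : D) : D :=
  (((if s then - p.1 else p.1) + (if p.2 then c else 0))%R, p.2).

Lemma aut_coordM s c p q :
  aut_coord s c (dmul p q) = dmul (aut_coord s c p) (aut_coord s c q).
Proof.
case: p q => [k e] [l f]; rewrite /aut_coord /dmul /=.
by case: s; case: e; case: f => /=; congr pair; lia.
Qed.

Lemma aut_coordK s c : cancel (aut_coord s c) (aut_coord s (if s then c else - c)%R).
Proof.
case=> k e; rewrite /aut_coord /=.
by case: s; case: e => /=; congr pair; lia.
Qed.

Lemma aut_coordK' s c : cancel (aut_coord s (if s then c else - c)%R) (aut_coord s c).
Proof.
case=> k e; rewrite /aut_coord /=.
by case: s; case: e => /=; congr pair; lia.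
Qed.

Definition autH (sv : 'I_r -> bool) (cv : 'I_r -> int) x : Hc r :=
  [ffun i => aut_coord (sv i) (cv i) (x i)].

Lemma autH_gaut sv cv : gaut (autH sv cv).
Proof.
split.
  by move=> x y; apply/ffunP=> i; rewrite /autH /= !ffunE aut_coordM.
exists (autH sv (fun i => if sv i then cv i else - cv i)%R) => x;
  apply/ffunP=> i; rewrite !ffunE ?aut_coordK ?aut_coordK' //.
Qed.

Definition canon x : Hc r :=
  [ffun i => if (x i).2 then (0%R, true) else (Posz (absz (x i).1), false)].

Lemma canon_equiv x : aut_equiv x (canon x).
Proof.
exists (autH (fun i => ~~ (x i).2 && ((x i).1 < 0)%R) (fun i => - (x i).1)%R).
split; first exact: autH_gaut.
apply/ffunP=> i; rewrite !ffunE /aut_coord; case: (x i) => k [] /=.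
  by congr pair; lia.
by case: ltrP => h; congr pair; lia.
Qed.

Lemma upper_H (S : seq (Hc r)) fn : is_aut_growth S fn -> gle fn (fun n => (n ^ r)%N).
Proof.
move=> hS; exists (2 * CS S + 2)%N; split; first by rewrite addn2.
move=> n; have [s [ss us bs ps cs]] := hS n; rewrite -ss.
set M := (n * CS S)%N.
pose enc (c : {ffun 'I_r -> 'I_M.+1 * bool}) : Hc r :=
  [ffun i => if (c i).2 then (0%R, true) else (Posz (c i).1, false)].
pose LM := [seq enc c | c <- enum {ffun 'I_r -> 'I_M.+1 * bool}].
have szLM : size LM = ((M.+1 * 2) ^ r)%N.
  by rewrite size_map -cardT card_ffun card_prod !card_ord card_bool.
have : (size (map canon s) <= size LM)%N.
  apply: uniq_leq_size.
    rewrite map_inj_in_uniq // => x y xs ys e; apply: ps => //.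
    apply: aut_trans (canon_equiv x) _; rewrite e; apply: aut_sym; exact: canon_equiv.
  move=> v /mapP [x xs ->]; apply/mapP.
  exists [ffun i => (inord (absz (x i).1), (x i).2)]; first by rewrite mem_enum.
  apply/ffunP=> i; rewrite !ffunE /=; case: (x i).2 => //.
  rewrite inordK // ltnS; apply: leq_trans (norm_coord x i) _.
  exact: wlen_norm (bs x xs).
rewrite size_map szLM => h; apply: leq_trans h _.
have hl : (0 < 2 * CS S + 2)%N by rewrite addn2.
apply: leq_trans (leq_addr _ _); apply: leq_trans (leq_pmull _ hl).
apply: expn_mono; rewrite /M; nia.
Qed.

End Upper.

Section AutStruct.
Variable r : nat.
Implicit Types (i j : 'I_r) (x y z w : Hc r).

Lemma hbE i j : hb i j = if j == i then (1%R, false) else d1.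
Proof. exact: deltaE. Qed.
Lemma huE i j : hu i j = if j == i then (0%R, true) else d1.
Proof. exact: deltaE. Qed.

Definition inA x := forall z, x * (z * z) = (z * z) * x.
Definition Cx x z := z * x = x * z.
Definition Pr x := [/\ inA x, x != 1 &
  forall y, inA y -> y != 1 -> (forall z, Cx x z -> Cx y z) -> forall z, Cx y z -> Cx x z].

Lemma coordP x y i : x = y -> x i = y i.
Proof. by move=> ->. Qed.

Lemma inA_iff x : inA x <-> forall i, (x i).2 = false.
Proof.
split=> [hx i|hx z].
  have := coordP i (hx (hb i)); rewrite !mulHE hbE eqxx /dmul /=.
  by case: (x i) => k [] //= [] h; lia.
apply/ffunP=> i; rewrite !mulHE; move: (hx i); case: (x i) => k e /= ->.
by case: (z i) => l [] ; rewrite /dmul /=; congr pair; lia.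
Qed.

Lemma Cx_iff x z : inA x -> (Cx x z <-> forall i, (x i).1 != 0%R -> (z i).2 = false).
Proof.
move/inA_iff => hx; split => [hz i|hz].
  have := coordP i hz; rewrite !mulHE; move: (hx i); case: (x i) => k e /= ->.
  case: (z i) => l [] //=; rewrite /dmul /= => -[h] kn; exfalso; move: kn; lia.
apply/ffunP=> i; rewrite !mulHE; move: (hx i) (hz i); case: (x i) => k e /= -> hi.
case: (z i) hi => l [] /= hi; last by rewrite /dmul /=; congr pair; lia.
have k0 : k = 0%R by apply/eqP; apply: contraT => kn; have := hi kn.
by rewrite k0 /dmul /=; congr pair; lia.
Qed.

Lemma eq1P x : (forall i, x i = d1) -> x = 1.
Proof. by move=> h; apply/ffunP=> i; rewrite h oneHE. Qed.

Lemma Pr_hb i : Pr (hb i).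
Proof.
have Ab : forall j, inA (hb j).
  by move=> j; apply/inA_iff => m; rewrite ?hbE ?huE ?deltaE; case: eqP.
split => //.
  apply/eqP => /(coordP i); rewrite ?hbE ?huE ?deltaE eqxx oneHE; by [].
move=> y Ay ny Cby z Cyz.
have y0 : forall j, j != i -> (y j).1 = 0%R.
  move=> j nji; apply/eqP; apply: contraT => yj.
  have := Cby (hu j); rewrite /Cx (deltaC _ _ nji) => /(_ erefl).
  by move/(Cx_iff _ Ay) => /(_ j yj); rewrite ?hbE ?huE ?deltaE eqxx.
have yi : (y i).1 != 0%R.
  apply: contra ny => /eqP yi0; apply/eqP; apply: eq1P => j.
  move/inA_iff : Ay => /(_ j); case: (eqVneq j i) => [->|nji].
    by case: (y i) yi0 => k e /= -> ->.
  by move: (y0 j nji); case: (y j) => k e /= -> ->.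
apply/(Cx_iff _ (Ab i)) => j; rewrite hbE; case: (eqVneq j i) => [->|nji] /= h.
  by move/(Cx_iff _ Ay): Cyz => /(_ i yi).
by rewrite ?eqxx in h.
Qed.

Lemma Pr_axis x : Pr x -> exists j (c : int), c != 0%R /\ x = delta j (c, false).
Proof.
case=> Ax nx hP.
have Ab : forall j, inA (hb j).
  by move=> j; apply/inA_iff => m; rewrite ?hbE ?huE ?deltaE; case: eqP.
case: (pickP (fun j => (x j).1 != 0%R)) => [j xj|none]; last first.
  case/eqP: nx; apply: eq1P => j; move: (none j) (inA_iff x).1 => /negbFE/eqP.
  by move=> h /(_ Ax j); case: (x j) h => k e /= -> ->.
exists j, (x j).1; split => //.
have Cxb : forall z, Cx x z -> Cx (hb j) z.
  move=> z /(Cx_iff _ Ax) hz; apply/(Cx_iff _ (Ab j)) => m.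
  rewrite hbE; case: (eqVneq m j) => [->|nmj] /= h; first by apply: hz.
  by rewrite ?eqxx in h.
have [_ nb _] := Pr_hb j.
have hb_x := hP _ (Ab j) nb Cxb.
have x0 : forall m, m != j -> (x m).1 = 0%R.
  move=> m nmj; apply/eqP; apply: contraT => xm.
  have := hb_x (hu m); rewrite /Cx (deltaC _ _ nmj) => /(_ erefl).
  by move/(Cx_iff _ Ax) => /(_ m xm); rewrite ?hbE ?huE ?deltaE eqxx.
apply/ffunP=> m; rewrite ?hbE ?huE ?deltaE; move/inA_iff: Ax => /(_ m).
case: (eqVneq m j) => [->|nmj]; first by case: (x j) => k e /= ->.
by move: (x0 m nmj); case: (x m) => k e /= -> ->.
Qed.

Lemma Cx_hom (f : Hc r -> Hc r) x z : ghom f -> Cx x z -> Cx (f x) (f z).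
Proof. by move=> hf; rewrite /Cx -!hf => ->. Qed.

Lemma inA_hom (f f' : Hc r -> Hc r) x : ghom f -> cancel f' f -> inA x -> inA (f x).
Proof. by move=> hf c Ax z; rewrite -(c z) -!hf Ax. Qed.

Lemma Pr_aut (f f' : Hc r -> Hc r) x :
  ghom f -> cancel f f' -> cancel f' f -> Pr x -> Pr (f x).
Proof.
move=> hf c1 c2 [Ax nx hP]; have hf' := inv_hom hf c1 c2.
split; first exact: inA_hom c2 Ax.
  by apply: contra nx => /eqP e; rewrite -(c1 x) e ghom1.
move=> y Ay ny hy z Cyz.
have Ay' : inA (f' y) by exact: inA_hom c1 Ay.
have ny' : f' y != 1 by apply: contra ny => /eqP e; rewrite -(c2 y) e ghom1.
have hy' : forall z, Cx x z -> Cx (f' y) z.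
  move=> u /(Cx_hom hf) /hy /(Cx_hom hf'); by rewrite c1.
have := hP _ Ay' ny' hy' (f' z) (Cx_hom hf' Cyz).
by move/(Cx_hom hf); rewrite !c2.
Qed.

Lemma powHE w m i : (w ^+ m) i = iter m (dmul (w i)) d1.
Proof. by elim: m => [|m IH]; rewrite ?expg0 ?oneHE // expgS mulHE IH. Qed.

Lemma dpow_val (k : int) (e : bool) m :
  iter m (dmul (k, e)) d1 =
  if e then (if odd m then (k, true) else d1) else ((k * m%:Z)%R, false).
Proof.
case: e; elim: m => [|m IH] /=; rewrite ?mulr0 //; rewrite IH.
  by case: (odd m) => /=; rewrite /dmul /d1 /=; congr pair; lia.
by rewrite /dmul /=; congr pair; lia.
Qed.

Lemma hb_noroot i w m : (2 <= m)%N -> w ^+ m <> hb i /\ w ^+ m <> (hb i)^-1.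
Proof.
move=> m2; split => /(coordP i); rewrite ?invHE powHE ?hbE ?huE ?deltaE eqxx;
  case: (w i) => k e; rewrite dpow_val; case: e.
- by case: (odd m).
- case=> h; move: h; have [hk|hk] := lerP k 0; nia.
- by case: (odd m).
- rewrite /dinv /= => -[h]; move: h; have [hk|hk] := lerP k (-1)%R; nia.
Qed.

Lemma aut_hb (f : Hc r -> Hc r) i : gaut f ->
  exists j (eps : bool), f (hb i) = delta j ((if eps then -1 else 1)%R, false).
Proof.
move=> [hf [f' c1 c2]]; have hf' := inv_hom hf c1 c2.
have [j [c [c0 e]]] := Pr_axis (Pr_aut hf c1 c2 (Pr_hb i)).
exists j; rewrite e.
have ez : delta j (c, false) = zpow (hb j) c by rewrite /hb zpow_delta mul1r.
case: c c0 e ez => [[|[|m]]|[|m]] // c0 e ez.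
- by exists false.
- exfalso; move: e; rewrite ez /zpow => /(congr1 f'); rewrite c1 ghomX //.
  by move/esym; apply: (hb_noroot _ _ _).1.
- by exists true; rewrite NegzE.
- exfalso; move: e; rewrite ez /zpow => /(congr1 f'); rewrite c1 ghomV // ghomX //.
  by move=> e; apply: (hb_noroot i (f' (hb j)) (_ : 2 <= m.+2)%N).2; rewrite ?e ?invgK.
Qed.

End AutStruct.

Section Lower.
Variable r : nat.
Implicit Types (i : 'I_r) (x y : Hc r).

Definition Kv n (j : {ffun 'I_r -> 'I_n.+1}) i : nat := (i.+1 * n.+1 + j i)%N.
Definition fam n (j : {ffun 'I_r -> 'I_n.+1}) : Hc r :=
  [ffun i => (Posz (Kv j i), false)].

Lemma hbX i (K : nat) : hb i ^+ K = delta i (Posz K, false).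
Proof. by rewrite -[hb i ^+ K]/(zpow (hb i) (Posz K)) /hb zpow_delta mul1r. Qed.

Lemma fam_prod n j :
  fam j = foldr (fun i acc => hb i ^+ (@Kv n j i) * acc) 1 (enum 'I_r).
Proof.
rewrite -{1}(psiH (fam j)) /psi FH.
by elim: (enum 'I_r) => //= i l ->; rewrite hbX ffunE.
Qed.

Lemma fam_inj n j j' : aut_equiv (@fam n j) (fam j') -> j = j'.
Proof.
move=> [f [[hf bf] e]].
have hP : forall i, exists p : 'I_r * bool,
    f (hb i) = delta p.1 ((if p.2 then -1 else 1)%R, false).
  by move=> i; have [q [eps h]] := aut_hb i (conj hf bf); exists (q, eps).
have [sg hsg] := functional_choice _ hP.
have sinj : injective (fun i => (sg i).1).
  case: bf => f' c1 c2.
  move=> i i' /= ei; have e1 := hsg i; have e2 := hsg i'; rewrite -ei in e2.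
  have key : hb i = hb i' \/ hb i = (hb i')^-1.
    case: (sg i).2 e1; case: (sg i').2 e2 => e2 e1; [left|right|right|left];
      apply: (can_inj c1); rewrite ?ghomV // e1 e2 ?deltaV //; congr delta;
      rewrite /dinv /=; congr pair; lia.
  case: key => /(coordP i); rewrite ?invHE !hbE eqxx;
    case: (eqVneq i i') => [-> //|_]; rewrite /dinv /d1 /= => -[] h; lia.
have ef : f (fam j) = foldr (fun i acc =>
     delta (sg i).1 (((if (sg i).2 then -1 else 1) * Posz (Kv j i))%R, false) * acc)
     1 (enum 'I_r).
  rewrite fam_prod; elim: (enum 'I_r) => /= [|i l <-]; first exact: ghom1.
  by rewrite hf ghomX // hsg -[_ ^+ Kv j i]/(zpow _ (Posz _)) zpow_delta.
apply/ffunP=> m; apply: val_inj => /=.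
have := coordP (sg m).1 e; rewrite ef.
rewrite (@Fsig r (enum 'I_r) (fun i => (sg i).1) _ m (enum_uniq _) sinj) mem_enum.
rewrite ffunE /Kv; case: (sg m).2 => -[] h; first by exfalso; move: h; lia.
have hj := ltn_ord (j m); have hj' := ltn_ord (j' (sg m).1).
have e1 : ((sg m).1.+1 * n.+1 + j' (sg m).1 = m.+1 * n.+1 + j m)%N by lia.
have es : (sg m).1 = m by apply: val_inj => /=; nia.
by move: e1; rewrite es => /eqP; rewrite eqn_add2l => /eqP.
Qed.

Lemma foldr_bound (l : seq 'I_r) (g : 'I_r -> nat) c :
  (forall i, g i <= c)%N -> (foldr (fun i acc => g i + acc) 0 l <= size l * c)%N.
Proof. by move=> hg; elim: l => //= i l IH; rewrite mulSn leq_add. Qed.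

Lemma lower_H (S : seq (Hc r)) fn :
  generates S -> is_aut_growth S fn -> gle (fun n => (n ^ r)%N) fn.
Proof.
move=> gS hS.
have [nf hnf] := functional_choice _ (fun i : 'I_r => gS (hb i)).
pose D := (\sum_(i < r) nf i)%N.
have hD : forall i, wlen_le S D (hb i).
  by move=> i; apply: wlen_mono (hnf i); rewrite /D (bigD1 i) //= leq_addr.
pose l := (r * (D * (r.+1 * 1)) + 1)%N.
exists l; split; first by rewrite /l addn1.
move=> n; have [s [ss us bs ps cs]] := hS (l * n + l)%N.
have wf : forall j : {ffun 'I_r -> 'I_n.+1}, wlen_le S (l * n + l) (fam j).
  move=> j; rewrite fam_prod.
  have : wlen_le S (foldr (fun i acc => D * Kv j i + acc) 0 (enum 'I_r))%N
                   (foldr (fun i acc => hb i ^+ Kv j i * acc) 1 (enum 'I_r)).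
    elim: (enum 'I_r) => /= [|i q IH]; first exact: wlen_one.
    by apply: wlen_mul => //; apply: wlen_X.
  apply: wlen_mono; apply: leq_trans (foldr_bound _ (c := (D * (r.+1 * n.+1))%N) _) _.
    move=> i; apply: leq_mul => //; rewrite /Kv.
    have := ltn_ord i; have := ltn_ord (j i); nia.
  rewrite size_enum_ord /l; nia.
have hp : forall j : {ffun 'I_r -> 'I_n.+1}, exists y, y \in s /\ aut_equiv (fam j) y.
  by move=> j; have [y ys e] := cs _ (wf j); exists y.
have [p hpp] := functional_choice _ hp.
have : (size (map p (enum {ffun 'I_r -> 'I_n.+1})) <= size s)%N.
  apply: uniq_leq_size.
    rewrite map_inj_in_uniq ?enum_uniq // => j j' _ _ e.
    apply: fam_inj; apply: aut_trans (hpp j).2 _; rewrite e; apply: aut_sym.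
    exact: (hpp j').2.
  by move=> y /mapP [j _ ->]; exact: (hpp j).1.
rewrite size_map -cardT card_ffun !card_ord ss => h.
apply: leq_trans (leq_addr _ _); apply: leq_trans (leq_pmull _ _); last by rewrite /l addn1.
apply: leq_trans h; apply: expn_mono; exact: leqnSn.
Qed.

End Lower.

Theorem mainTheorem12 (r : nat) (G : groupType) (a t : 'I_r -> G) :
  (0 < r)%N -> presents a t ->
  [/\ virtually_abelian_of_rank G r,
      (forall S : seq G, generates S ->
         (exists f, is_aut_growth S f) /\
         (forall f, is_aut_growth S f -> gequiv f (fun n => (n ^ r)%N))) &
      (forall g, in_gen (@commutator_elt G) g <->
                 in_gen (fun x => exists i, x = a i ^+ 2) g)].
Proof.
move=> r0 [hr gen univ].
have [f [hf hfat]] := univ _ (@hb r) (@hu r) (rels_H r).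
have fa : forall i, f (a i) = hb i by move=> i; case: (hfat i).
have ft : forall i, f (t i) = hu i by move=> i; case: (hfat i).
pose g := psi a t.
have gf : cancel g f := f_psi hf fa ft.
have fg : cancel f g.
  by move=> x; have [h ->] := psi_surj hr gen x; rewrite gf.
have hg' := hg hf fg gf.
split.
- exact: T_va hf fg gf (va_H r).
- move=> S gS; split; first exact: growth_exists.
  move=> fn hS; have hS' := T_growth hf fg gf hS; have gS' := T_gen hf gf gS.
  by split; [exact: upper_H hS' | exact: lower_H gS' hS'].
- move=> x; split => hx.
  + have h1 : in_gen (@commutator_elt (Hc r)) (f x).
      apply: in_gen_mono (T_ingen hf fg hx) => y [u [v e]].
      by exists (f u), (f v); rewrite -(gf y) e /commg /conjg !hf !ghomV.
    have := T_ingen hg' gf ((comm_H (f x)).1 h1); rewrite fg; apply: in_gen_mono.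
    by move=> y [i e]; exists i; rewrite -(fg y) e ghomX // -fa fg.
  + have h1 : in_gen (fun y => exists i, y = hb i ^+ 2) (f x).
      apply: in_gen_mono (T_ingen hf fg hx) => y [i e].
      by exists i; rewrite -(gf y) e ghomX // fa.
    have := T_ingen hg' gf ((comm_H (f x)).2 h1); rewrite fg; apply: in_gen_mono.
    by move=> y [u [v e]]; exists (g u), (g v); rewrite -(fg y) e /commg /conjg !hg' !ghomV.
Qed.
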